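(* For arbitrary real $b_1,\dots,b_s,c_1,\dots,c_s$, the polynomials $v_{i_1,\dots,i_k}=v_{i_1,\dots,i_k}(b_1,c_1,\dots,b_s,c_s)$ satisfy, for all multi-indices $(i_1,\dots,i_n)$ and $(i_{n+1},\dots,i_{n+m})$ of positive integers, $$v_{i_1,\dots,i_n}\,v_{i_{n+1},\dots,i_{n+m}}=\sum_{\sigma\in\mathrm{Sh}(n,m)}v_{i_{\sigma(1)},\dots,i_{\sigma(n+m)}}.$$ The same identities hold for the coefficients $\frac1{(i_1+\cdots+i_k)\cdots(i_1+i_2)i_1}$.
   Context: $v_{i_1,\dots,i_k}=\sum_{1\le j_1\le\cdots\le j_k\le s}\frac{b_{j_1}\cdots b_{j_k}}{\sigma(j_1,\dots,j_k)}c_{j_1}^{i_1-1}\cdots c_{j_k}^{i_k-1}$, where $\sigma(j_1,\dots,j_k)=1$ if $j_1<\cdots<j_k$ and $\sigma(j_1,\dots,j_k)=\ell!\,\sigma(j_{\ell+1},\dots,j_k)$ if $j_1=\cdots=j_\ell<j_{\ell+1}\le\cdots\le j_k$. $\mathrm{Sh}(n,m)$ is the set of the $(n+m)!/(n!m!)$ permutations $\sigma$ of $(1,\dots,n+m)$ obtained by interleaving $(1,\dots,n)$ and $(n+1,\dots,n+m)$ while preserving their respective orders. *)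

(* Defs.v *)
From HB Require Import structures.
From mathcomp Require Import all_boot all_order all_algebra all_fingroup.
Set Implicit Arguments. Unset Strict Implicit. Unset Printing Implicit Defensive.
Import Order.TTheory GRing.Theory Num.Theory.
Local Open Scope ring_scope.

(* sigma(j_1,...,j_k) for a nondecreasing sequence j: the product of l! over
   the maximal blocks j_a = ... = j_{a+l-1} of equal entries, i.e. the
   product over the distinct values x of (multiplicity of x)!. *)
Definition sigw (s : nat) (t : seq 'I_s) : nat :=
  (\prod_(x <- undup t) (count_mem x t)`!)%N.

(* v_{i_1,...,i_k}(b_1,c_1,...,b_s,c_s), with I = [:: i_1; ...; i_k];
   the sum ranges over nondecreasing k-tuples (j_1 <= ... <= j_k) of 'I_s
   (indices shifted to start at 0). *)
Definition vpoly (R : fieldType) (s : nat) (b c : 'I_s -> R) (I : seq nat) : R :=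
  \sum_(t : (size I).-tuple 'I_s | sorted (fun x y : 'I_s => leq x y) t)
    ((\prod_(l < size I) b (tnth t l)) / (sigw t)%:R
      * \prod_(l < size I) c (tnth t l) ^+ (nth 0%N I l).-1).

Definition wcoef (R : fieldType) (I : seq nat) : R :=
  1 / \prod_(p < size I) (\sum_(q < size I | (q <= p)%N) nth 0%N I q)%:R.

(* Sh(n,m): permutations sigma of {0,...,n+m-1} such that the sequence
   (sigma(0),...,sigma(n+m-1)) is an interleaving of (0,...,n-1) and
   (n,...,n+m-1) preserving their respective orders, i.e. any two values
   a < b in the same block appear in that order (sigma^-1 a < sigma^-1 b). *)
Definition shuffleb (n m : nat) (p : {perm 'I_(n + m)}) : bool :=
  [forall a : 'I_(n + m), forall b : 'I_(n + m),
     ((a < b)%N && ((b < n)%N || (n <= a)%N)) ==> ((p^-1)%g a < (p^-1)%g b)%N].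

Definition shuffle_word (I J : seq nat) (p : {perm 'I_(size I + size J)}) : seq nat :=
  [seq nth 0%N (I ++ J) (p k) | k <- enum 'I_(size I + size J)].

(* Main.v *)
Require Import Defs.
From HB Require Import structures.
From mathcomp Require Import all_boot all_order all_algebra all_fingroup.
From mathcomp Require Import ring.
Import Order.TTheory GRing.Theory Num.Theory.
Section Part0.
Set Implicit Arguments. Unset Strict Implicit. Unset Printing Implicit Defensive.

Fixpoint SH (T : Type) (u v : seq T) : seq (seq T) :=
  match u with
  | [::] => [:: v]
  | a :: u' => let fix SHa v := match v with
        | [::] => [:: u]
        | b :: v' => map (cons a) (SH u' v) ++ map (cons b) (SHa v')
        end in SHa v
  end.

Lemma SH0l T (v : seq T) : SH [::] v = [:: v]. Proof. by []. Qed.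
Lemma SH0r T (u : seq T) : SH u [::] = [:: u]. Proof. by case: u. Qed.
Lemma SHcc T (a b : T) u v : SH (a :: u) (b :: v) =
  map (cons a) (SH u (b :: v)) ++ map (cons b) (SH (a :: u) v).
Proof. by []. Qed.

Lemma SH_map T T' (f : T -> T') u v :
  SH (map f u) (map f v) = map (map f) (SH u v).
Proof.
elim: u v => [|a u IHu] v; first by [].
elim: v => [|b v IHv]; first by [].
by rewrite [map f _]/= [map f (b :: v)]/= SHcc -/(map f (b :: v)) IHu -/(map f (a :: u)) IHv map_cat -!map_comp.
Qed.

Lemma SH_perm (T : eqType) (u v w : seq T) : w \in SH u v -> perm_eq w (u ++ v).
Proof.
elim: u v w => [|a u IHu] v w; first by rewrite inE => /eqP ->.
elim: v w => [|b v IHv] w; first by rewrite SH0r inE cats0 => /eqP ->.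
rewrite SHcc mem_cat => /orP[] /mapP[w' Hw' ->].
  by rewrite /= perm_cons IHu.
apply: (@perm_trans _ (b :: ((a :: u) ++ v))).
  by rewrite perm_cons IHv.
by rewrite perm_sym (perm_catCA (a :: u) [:: b] v).
Qed.

Lemma size_SH T (u v : seq T) : size (SH u v) = 'C(size u + size v, size u).
Proof.
elim: u v => [|a u IHu] v; first by rewrite /= bin0.
elim: v => [|b v IHv]; first by rewrite SH0r addn0 binn.
rewrite SHcc size_cat !size_map IHu IHv /=.
by rewrite !addSn !addnS binS addnC.
Qed.

Lemma perm_swap2 (T : eqType) (a b : T) u v :
  perm_eq (a :: u ++ b :: v) (b :: (a :: u ++ v)).
Proof. by rewrite (perm_catCA (a :: u) [:: b] v). Qed.

Lemma uniq_SH (T : eqType) (u v : seq T) : uniq (u ++ v) -> uniq (SH u v).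
Proof.
elim: u v => [|a u IHu] v; first by [].
elim: v => [|b v IHv]; first by rewrite SH0r.
move=> Hu; rewrite SHcc cat_uniq !map_inj_uniq; try by move=> ? ? [].
have Hu2 := Hu; rewrite (perm_uniq (perm_swap2 a b u v)) /= in Hu2.
case/andP: Hu2 => Hb Hu2.
rewrite IHu ?IHv //=; last by case/andP: Hu.
rewrite andbT; apply/hasPn => x /mapP[y _ ->]; apply/negP => /mapP[z _ [eab _]].
by move: Hb; rewrite eab /= inE eqxx.
Qed.

Lemma subseq_perm_eq (T : eqType) (v w : seq T) :
  perm_eq w v -> subseq v w -> w = v.
Proof.
move=> Hp Hs; apply/esym/eqP; rewrite -(geq_leqif (size_subseq_leqif Hs)).
by rewrite (perm_size Hp).
Qed.

Lemma mem_SH (T : eqType) (u v w : seq T) : uniq (u ++ v) ->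
  (w \in SH u v) = [&& perm_eq w (u ++ v), subseq u w & subseq v w].
Proof.
elim: u v w => [|a u IHu] v w.
  move=> _; rewrite SH0l inE sub0seq /=; apply/eqP/andP => [->|[H1 H2]].
    by rewrite perm_refl subseq_refl.
  exact: subseq_perm_eq.
elim: v w => [|b v IHv] w.
  move=> _; rewrite SH0r inE sub0seq andbT cats0; apply/eqP/andP => [->|[H1 H2]].
    by rewrite perm_refl subseq_refl.
  exact: subseq_perm_eq.
move=> Hu.
have Hu2 := Hu; rewrite (perm_uniq (perm_swap2 a b u v)) /= in Hu2.
case/andP: Hu2 => Hb Hu2.
have Hu1 : uniq (u ++ b :: v) by case/andP: Hu.
have Ha : a \notin u ++ b :: v by case/andP: Hu.
have Hab : a != b by apply: contraNneq Ha => ->; rewrite mem_cat mem_head orbT.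
rewrite SHcc mem_cat; apply/orP/and3P.
  case=> /mapP[w' Hw' ->].
    move: Hw'; rewrite IHu // => /and3P[H1 H2 H3].
    split; first by rewrite /= perm_cons.
      by rewrite /= eqxx.
    by apply: subseq_trans H3 (subseq_cons _ _).
  move: Hw'; rewrite IHv // => /and3P[H1 H2 H3].
  split.
  - apply: (@perm_trans _ (b :: ((a :: u) ++ v))); first by rewrite perm_cons.
    by rewrite perm_sym perm_swap2.
  - by apply: subseq_trans H2 (subseq_cons _ _).
  - by rewrite /= eqxx.
case: w => [|z w'] [H1 H2 H3]; first by move: (perm_size H1); rewrite size_cat.
have Uw : uniq (z :: w') by rewrite (perm_uniq H1).
have [eza|nza] := eqVneq z a.
  left; rewrite eza; apply/map_f; rewrite IHu //.
  move: H1 H2 H3; rewrite eza /= perm_cons eqxx => -> -> /=.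
  by rewrite eq_sym (negbTE Hab).
have [ezb|nzb] := eqVneq z b.
  right; rewrite ezb; apply/map_f; rewrite IHv //.
  move: H1 H2 H3; rewrite ezb /= eqxx (negbTE Hab) => H1 -> ->.
  apply/andP; split=> //; rewrite -(perm_cons b); apply: (perm_trans H1); exact: perm_swap2.
exfalso.
have : z \in a :: u ++ b :: v by rewrite -(perm_mem H1) inE eqxx.
move: H2 H3; rewrite /= eq_sym (negbTE nza) eq_sym (negbTE nzb) => H2 H3.
rewrite !inE (negbTE nza) mem_cat inE (negbTE nzb) /= => /orP[] zin.
  have zin' : z \in a :: u by rewrite inE zin orbT.
  by have := mem_subseq H2 zin'; move: Uw => /= /andP[/negP].
have zin' : z \in b :: v by rewrite inE zin orbT.
by have := mem_subseq H3 zin'; move: Uw => /= /andP[/negP].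
Qed.

Lemma SH_rev_perm (T : eqType) (u v : seq T) : uniq (u ++ v) ->
  perm_eq (SH u v) (map rev (SH (rev u) (rev v))).
Proof.
move=> Hu.
have Hr : uniq (rev u ++ rev v) by rewrite -rev_cat rev_uniq uniq_catC.
apply: uniq_perm; first exact: uniq_SH.
  by rewrite map_inj_uniq ?uniq_SH //; exact: (can_inj revK).
move=> w; rewrite -{2}(revK w) (mem_map (can_inj revK)) !mem_SH // !subseq_rev.
rewrite -rev_cat; congr (_ && _).
have E (s t : seq T) : perm_eq (rev s) (rev t) = perm_eq s t.
  by apply/idP/idP => /seq.permP H; apply/seq.permP => a; move: (H a); rewrite !count_rev.
by rewrite E perm_sym perm_catC perm_sym.
Qed.

Lemma subseq_index_lt (T : eqType) (L w : seq T) x y : uniq w -> subseq L w ->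
  x \in L -> y \in L -> (index x L < index y L)%N -> (index x w < index y w)%N.
Proof.
elim: w L => [|z w IH] [|l L] //=.
case/andP=> zw Uw; have [elz|nlz] := eqVneq l z.
  rewrite elz => HL; rewrite !inE.
  have [->|nxz] := eqVneq x z; have [->|nyz] := eqVneq y z => //=.
  by move=> xL yL; rewrite !ltnS; apply: IH.
move=> HL xL yL lt.
have xw : x \in w by apply: (mem_subseq HL).
have yw : y \in w by apply: (mem_subseq HL).
have nxz : x != z by apply: contraNneq zw => <-.
have nyz : y != z by apply: contraNneq zw => <-.
rewrite /= eq_sym (negbTE nxz) eq_sym (negbTE nyz) ltnS.
by apply: (IH (l :: L)) => //=; rewrite ?inE.
Qed.

Lemma index_subseq (T : eqType) (L w : seq T) : uniq L -> uniq w ->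
  {subset L <= w} ->
  (forall x y, x \in L -> y \in L -> (index x L < index y L)%N ->
     (index x w < index y w)%N) -> subseq L w.
Proof.
elim: w L => [|z w IH] L.
  by case: L => // l L _ _ /(_ l (mem_head _ _)).
move=> UL Uzw sub H; case/andP: (Uzw) => zw Uw.
have shift : forall x, x != z -> index x (z :: w) = (index x w).+1.
  by move=> x nxz; rewrite /= eq_sym (negbTE nxz).
have [zL|nzL] := boolP (z \in L); last first.
  have subL : {subset L <= w}.
    move=> x xL; have := sub x xL; rewrite inE => /orP[/eqP exz|//].
    by move: nzL; rewrite -exz xL.
  apply: subseq_trans (subseq_cons w z); apply: IH => // x y xL yL lt.
  have nxz : x != z by apply: contraNneq nzL => <-.
  have nyz : y != z by apply: contraNneq nzL => <-.
  by have := H x y xL yL lt; rewrite !shift.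
case: L UL sub H zL => [//|l L] /= /andP[lL UL] sub H zL.
have elz : l = z.
  apply/eqP; apply: contraT => nlz.
  have : (index l (l :: L) < index z (l :: L))%N.
    by rewrite /= eqxx (negbTE nlz).
  by move/(H l z (mem_head _ _) zL); rewrite /= eqxx.
subst l; rewrite eqxx; apply: IH => //.
  move=> x xL; have xzL : x \in z :: L by rewrite inE xL orbT.
  have := sub x xzL; rewrite inE => /orP[/eqP exz|//].
  by move: lL; rewrite -exz xL.
move=> x y xL yL lt.
have nxz : x != z by apply: contraNneq lL => <-.
have nyz : y != z by apply: contraNneq lL => <-.
have xzL : x \in z :: L by rewrite inE xL orbT.
have yzL : y \in z :: L by rewrite inE yL orbT.
have := H x y xzL yzL.
by rewrite eq_sym (negbTE nxz) eq_sym (negbTE nyz) ltnS => /(_ lt).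
Qed.

Definition lab N (p : {perm 'I_N}) : seq nat := [seq val (p k) | k <- enum 'I_N].

Lemma index_lab N (p : {perm 'I_N}) (x : 'I_N) :
  index (val x) (lab p) = val ((p^-1)%g x).
Proof.
have inj : injective (fun k => val (p k)) by move=> ? ? /val_inj/perm_inj.
rewrite /lab -{1}(permKV p x).
by rewrite (index_map inj) index_enum_ord.
Qed.

Lemma lab_inj N : injective (@lab N).
Proof.
move=> p q E; apply: (@invg_inj _ p q); apply/permP => k; apply/val_inj.
by rewrite -!index_lab E.
Qed.

Lemma uniq_lab N (p : {perm 'I_N}) : uniq (lab p).
Proof.
rewrite map_inj_uniq ?enum_uniq //; by move=> ? ? /val_inj/perm_inj.
Qed.

Lemma perm_lab N (p : {perm 'I_N}) : perm_eq (lab p) (iota 0 N).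
Proof.
apply: uniq_perm; rewrite ?uniq_lab ?iota_uniq // => x.
rewrite mem_iota add0n /=; apply/mapP/idP => [[k _ ->]|xN].
  exact: ltn_ord.
exists ((p^-1)%g (Ordinal xN)); first by rewrite mem_enum.
by rewrite permKV.
Qed.

Lemma index_iota_eq m n x : (m <= x < m + n)%N -> index x (iota m n) = (x - m)%N.
Proof.
case/andP=> h1 h2.
have hi : (x - m < n)%N by rewrite ltn_subLR.
rewrite -{1}(subnKC h1) -(nth_iota 0 m hi) index_uniq ?iota_uniq ?size_iota //.
Qed.

Lemma shuffleb_lab n m (p : {perm 'I_(n + m)}) :
  shuffleb p = subseq (iota 0 n) (lab p) && subseq (iota n m) (lab p).
Proof.
apply/idP/andP.
  move=> /forallP H.
  have key : forall x y : 'I_(n + m), (x < y)%N -> ((y < n)%N || (n <= x)%N) ->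
      (index (val x) (lab p) < index (val y) (lab p))%N.
    move=> x y xy hb; rewrite !index_lab.
    by have := forallP (H x) y; rewrite xy hb.
  split; apply: index_subseq; rewrite ?iota_uniq ?uniq_lab //.
  - move=> x; rewrite (perm_mem (perm_lab p)) !mem_iota !add0n /=.
    by move=> h; rewrite (leq_trans h) // leq_addr.
  - move=> x y; rewrite !mem_iota !add0n => /andP[_ hx] /andP[_ hy].
    rewrite !index_iota_eq ?hx ?hy // !subn0 => lt.
    have hx' : (x < n + m)%N by rewrite (leq_trans hx) ?leq_addr.
    have hy' : (y < n + m)%N by rewrite (leq_trans hy) ?leq_addr.
    by apply: (key (Ordinal hx') (Ordinal hy')) => //=; rewrite hy.
  - by move=> x; rewrite (perm_mem (perm_lab p)) !mem_iota add0n => /andP[_ h].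
  - move=> x y; rewrite !mem_iota => /andP[hx hx2] /andP[hy hy2].
    rewrite !index_iota_eq ?hx ?hx2 ?hy ?hy2 // => lt.
    have lt' : (x < y)%N by rewrite -(ltn_add2r n) !subnK in lt.
    by apply: (key (Ordinal hx2) (Ordinal hy2)) => //=; rewrite hx orbT.
case=> H1 H2; apply/forallP => x; apply/forallP => y; apply/implyP => /andP[xy].
case/orP => hb; rewrite -!index_lab.
  have hx : (x < n)%N by apply: ltn_trans hb.
  apply: (subseq_index_lt (uniq_lab p) H1); rewrite ?mem_iota //= ?add0n ?hx ?hb //.
  by rewrite !index_iota_eq ?add0n ?hx ?hb // !subn0.
have hy : (n <= y)%N by apply: leq_trans hb (ltnW xy).
apply: (subseq_index_lt (uniq_lab p) H2); rewrite ?mem_iota ?hb ?hy ?ltn_ord //.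
rewrite !index_iota_eq ?hb ?hy ?ltn_ord //.
by rewrite ltn_sub2r // (leq_ltn_trans hb xy).
Qed.

Lemma lab_surj N (w : seq nat) : perm_eq w (iota 0 N) -> exists p : {perm 'I_N}, lab p = w.
Proof.
move=> Hp.
have Hs : size w = N by rewrite (perm_size Hp) size_iota.
have Uw : uniq w by rewrite (perm_uniq Hp) iota_uniq.
have Hw : forall k : 'I_N, (nth 0%N w k < N)%N.
  move=> k; have : nth 0%N w k \in iota 0 N.
    by rewrite -(perm_mem Hp) mem_nth // Hs.
  by rewrite mem_iota.
have inj : injective (fun k => Ordinal (Hw k)).
  move=> k k' [] /eqP; rewrite nth_uniq ?Hs // => /eqP; apply: val_inj.
exists (perm inj); rewrite /lab.
rewrite (eq_map (g := fun k : 'I_N => nth 0%N w k)); last by move=> k; rewrite permE.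
have -> : [seq nth 0%N w (val k) | k <- enum 'I_N] = map (nth 0%N w) (map val (enum 'I_N)).
  by rewrite -map_comp.
by rewrite val_enum_ord -Hs -/(mkseq _ _) mkseq_nth.
Qed.

Local Open Scope ring_scope.

Lemma sum_lab (R : zmodType) n m (G : seq nat -> R) :
  \sum_(p : {perm 'I_(n + m)} | shuffleb p) G (lab p) =
  \sum_(w <- SH (iota 0 n) (iota n m)) G w.
Proof.
set S := SH _ _.
have Ecat : iota 0 n ++ iota n m = iota 0 (n + m) by rewrite iotaD.
have US : uniq (iota 0 n ++ iota n m) by rewrite Ecat iota_uniq.
have E : forall p : {perm 'I_(n + m)}, shuffleb p = (lab p \in S).
  by move=> p; rewrite shuffleb_lab mem_SH // Ecat perm_lab.
rewrite (eq_bigl _ _ E) -(big_map (@lab _) (fun w => w \in S) G) -big_filter.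
apply: perm_big; apply: uniq_perm.
- by rewrite filter_uniq // map_inj_uniq ?index_enum_uniq //; exact: lab_inj.
- exact: uniq_SH.
move=> w; rewrite mem_filter; apply/andP/idP => [[]//|wS]; split=> //.
have : perm_eq w (iota 0 (n + m)) by move: wS; rewrite mem_SH // Ecat => /andP[].
case/lab_surj => p <-; apply: map_f; exact: mem_index_enum.
Qed.

Lemma map_nth_iota_cat (I J : seq nat) :
  map (nth 0%N (I ++ J)) (iota 0 (size I)) = I /\
  map (nth 0%N (I ++ J)) (iota (size I) (size J)) = J.
Proof.
have := mkseq_nth 0%N (I ++ J); rewrite /mkseq size_cat iotaD map_cat add0n.
move/eqP; rewrite eqseq_cat ?size_map ?size_iota // => /andP[/eqP -> /eqP ->].
by [].
Qed.

Lemma sum_shuffle (R : zmodType) (F : seq nat -> R) (I J : seq nat) :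
  \sum_(p : {perm 'I_(size I + size J)} | shuffleb p) F (shuffle_word p) =
  \sum_(w <- SH I J) F w.
Proof.
have E : forall p : {perm 'I_(size I + size J)},
    shuffle_word p = map (nth 0%N (I ++ J)) (lab p).
  by move=> p; rewrite /shuffle_word /lab -map_comp.
rewrite (eq_bigr (fun p => F (map (nth 0%N (I ++ J)) (lab p)))); last by move=> p _; rewrite E.
rewrite (@sum_lab _ _ _ (fun w => F (map (nth 0%N (I ++ J)) w))).
have [E1 E2] := map_nth_iota_cat I J.
set g := nth 0%N (I ++ J) in E1 E2 *.
by rewrite -[in RHS]E1 -[in RHS]E2 SH_map big_map.
Qed.

Lemma sum_SH_rev (R : zmodType) (F : seq nat -> R) (I J : seq nat) :
  \sum_(w <- SH I J) F w = \sum_(w <- SH (rev I) (rev J)) F (rev w).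
Proof.
have [E1 E2] := map_nth_iota_cat I J.
set g := nth 0%N (I ++ J) in E1 E2 *.
have US : uniq (iota 0 (size I) ++ iota (size I) (size J)) by rewrite -iotaD iota_uniq.
rewrite -[in LHS]E1 -[in LHS]E2 -[in RHS]E1 -[in RHS]E2 -!map_rev !SH_map !big_map.
rewrite (perm_big _ (SH_rev_perm US)) big_map.
by apply: eq_bigr => w _; rewrite map_rev.
Qed.

End Part0.

Section Part1.
Set Implicit Arguments. Unset Strict Implicit. Unset Printing Implicit Defensive.
Local Open Scope ring_scope.

Lemma wcoefE (R : fieldType) I : wcoef R I =
  1 / \prod_(p < size I) (\sum_(q < size I | (q <= p)%N) (nth 0%N I q)%:R).
Proof. rewrite /wcoef. under eq_bigr do rewrite natr_sum. by []. Qed.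

Lemma sumn_ord (R : fieldType) (I : seq nat) :
  (sumn I)%:R = \sum_(q < size I) (nth 0%N I q)%:R :> R.
Proof.
elim: I => [|x I IH]; first by rewrite big_ord0.
by rewrite /= big_ord_recl /= natrD IH.
Qed.

Lemma wcoef_rcons (R : fieldType) I a : wcoef R (rcons I a) = wcoef R I / (sumn I + a)%:R.
Proof.
rewrite !wcoefE size_rcons big_ord_recr /=.
rewrite !div1r -invfM; congr (_ ^-1); congr (_ * _); last first.
  rewrite (eq_bigl xpredT); last by move=> q; rewrite -ltnS ltn_ord.
  rewrite big_ord_recr /= nth_rcons ltnn eqxx natrD sumn_ord.
  congr (_ + _); apply: eq_bigr => q _; by rewrite /= nth_rcons ltn_ord.
apply: eq_bigr => i _.
rewrite big_mkcond big_ord_recr /= leqNgt ltn_ord /= addr0 -big_mkcond /=.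
by apply: eq_bigr => q _; rewrite nth_rcons ltn_ord.
Qed.

Fixpoint Z (R : fieldType) (u : seq nat) : R :=
  if u is a :: u' then Z R u' / (a + sumn u')%:R else 1.

Lemma wcoef_rev (R : fieldType) u : wcoef R (rev u) = Z R u.
Proof.
elim: u => [|a u IH]; first by rewrite /wcoef /= big_ord0 divr1.
by rewrite rev_cons wcoef_rcons IH sumn_rev addnC.
Qed.


Lemma Z_SH (R : numFieldType) (u v : seq nat) :
  all (fun i => 0 < i)%N u -> all (fun i => 0 < i)%N v ->
  Z R u * Z R v = \sum_(w <- SH u v) Z R w.
Proof.
elim: u v => [|a u IHu] v.
  by move=> _ _; rewrite SH0l big_seq1 mul1r.
elim: v => [|b v IHv].
  by move=> _ _; rewrite SH0r big_seq1 mulr1.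
move=> Hau Hbv.
have Hu : all (fun i => 0 < i)%N u by case/andP: Hau.
have Hv : all (fun i => 0 < i)%N v by case/andP: Hbv.
have ha : (0 < a)%N by case/andP: Hau.
have hb : (0 < b)%N by case/andP: Hbv.
rewrite SHcc big_cat !big_map /=.
have S1 : forall w, w \in SH u (b :: v) -> sumn w = (sumn u + (b + sumn v))%N.
  by move=> w /SH_perm/perm_sumn ->; rewrite sumn_cat.
have S2 : forall w, w \in SH (a :: u) v -> sumn w = (a + sumn u + sumn v)%N.
  by move=> w /SH_perm/perm_sumn ->; rewrite sumn_cat.
rewrite (eq_big_seq (fun w => Z R w * ((a + sumn u + (b + sumn v))%N%:R)^-1)); last first.
  by move=> w /S1 ->; rewrite addnA.
rewrite [X in _ = _ + X](eq_big_seq (fun w => Z R w * ((a + sumn u + (b + sumn v))%N%:R)^-1)); last first.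
  by move=> w /S2 ->; rewrite addnCA.
rewrite -!mulr_suml -IHu // -IHv //=.
have hA : ((a + sumn u)%N%:R : R) != 0 by rewrite pnatr_eq0 -lt0n addn_gt0 ha.
have hB : ((b + sumn v)%N%:R : R) != 0 by rewrite pnatr_eq0 -lt0n addn_gt0 hb.
have hAB : ((a + sumn u + (b + sumn v))%N%:R : R) != 0.
  by rewrite pnatr_eq0 -lt0n !addn_gt0 ha.
move: hAB; rewrite natrD => hAB.
field.
by move: hA hB hAB; rewrite !natrD => -> -> ->.
Qed.

End Part1.

Section Part2.
Set Implicit Arguments. Unset Strict Implicit. Unset Printing Implicit Defensive.
Local Open Scope ring_scope.

Arguments SH : simpl never.

Lemma sum_split_in (R : nmodType) n m (F : nat -> nat -> R) :
  \sum_(j1 < n) \sum_(j2 < m.+1) F j1 j2 =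
  \sum_(j1 < n) F j1 0%N + \sum_(j1 < n) \sum_(k2 < m) F j1 k2.+1.
Proof. by rewrite -big_split; apply: eq_bigr => j _; rewrite big_ord_recl. Qed.

Lemma sum_split_out (R : nmodType) n m (F : nat -> nat -> R) :
  \sum_(j1 < n.+1) \sum_(j2 < m) F j1 j2 =
  \sum_(j2 < m) F 0%N j2 + \sum_(k1 < n) \sum_(j2 < m) F k1.+1 j2.
Proof. by rewrite big_ord_recl. Qed.

Lemma sum_split2 (R : nmodType) n m (F : nat -> nat -> R) :
  \sum_(j1 < n.+1) \sum_(j2 < m.+1) F j1 j2 =
  F 0%N 0%N + \sum_(k2 < m) F 0%N k2.+1 + (\sum_(k1 < n) F k1.+1 0%N +
  \sum_(k1 < n) \sum_(k2 < m) F k1.+1 k2.+1).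
Proof.
rewrite sum_split_out big_ord_recl; congr (_ + _).
by rewrite -big_split; apply: eq_bigr => k _; rewrite big_ord_recl.
Qed.

Lemma deconcat (R : comRingType) (T : Type) (u v : seq T) (G : seq T -> seq T -> R) :
  \sum_(w <- SH u v) \sum_(j < (size w).+1) G (take j w) (drop j w) =
  \sum_(j1 < (size u).+1) \sum_(j2 < (size v).+1)
    \sum_(w1 <- SH (take j1 u) (take j2 v)) \sum_(w2 <- SH (drop j1 u) (drop j2 v))
      G w1 w2.
Proof.
elim: u v G => [|a u IHu] v G.
  rewrite SH0l big_seq1 /= big_ord1.
  by apply: eq_bigr => j _; rewrite /= !SH0l !big_seq1.
elim: v G => [|b v IHv] G.
  rewrite SH0r big_seq1; apply: eq_bigr => j _.
  by rewrite /= big_ord1 /= !SH0r !big_seq1.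
rewrite SHcc big_cat !big_map.
under eq_bigr do rewrite big_ord_recl.
rewrite big_split /=.
under [X in _ + X = _]eq_bigr do rewrite big_ord_recl.
rewrite big_split /=.
rewrite (IHu (b :: v) (fun x y => G (a :: x) y)).
rewrite (IHv (fun x y => G (b :: x) y)).
set L1 := \sum_(i <- SH u (b :: v)) _.
set L3 := \sum_(i <- SH (a :: u) v) _.
pose FA (j1 j2 : nat) := \sum_(w1 <- SH (take j1 u) (take j2 (b :: v)))
    \sum_(w2 <- SH (drop j1 u) (drop j2 (b :: v))) G (a :: w1) w2.
pose FB (j1 j2 : nat) := \sum_(w1 <- SH (take j1 (a :: u)) (take j2 v))
    \sum_(w2 <- SH (drop j1 (a :: u)) (drop j2 v)) G (b :: w1) w2.
pose F (j1 j2 : nat) := \sum_(w1 <- SH (take j1 (a :: u)) (take j2 (b :: v)))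
    \sum_(w2 <- SH (drop j1 (a :: u)) (drop j2 (b :: v))) G w1 w2.
rewrite -/(\sum_(j1 < _) \sum_(j2 < _) FA j1 j2) -/(\sum_(j1 < _) \sum_(j2 < _) FB j1 j2).
rewrite -/(\sum_(j1 < _) \sum_(j2 < _) F j1 j2).
rewrite (@sum_split_in R _ _ FA) (@sum_split_out R _ _ FB) (@sum_split2 R _ _ F).
have E00 : F 0%N 0%N = L1 + L3.
  by rewrite /F /= SH0l big_seq1 SHcc big_cat !big_map.
have E0k : \sum_(k2 < (size v).+1) F 0%N k2.+1 = \sum_(j2 < (size v).+1) FB 0%N j2.
  by apply: eq_bigr => k _; rewrite /F /FB /= !SH0l !big_seq1.
have Ek0 : \sum_(k1 < (size u).+1) F k1.+1 0%N = \sum_(j1 < (size u).+1) FA j1 0%N.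
  by apply: eq_bigr => k _; rewrite /F /FA /= !SH0r !big_seq1.
have Ekk : \sum_(k1 < (size u).+1) \sum_(k2 < (size v).+1) F k1.+1 k2.+1 =
   \sum_(k1 < (size u).+1) \sum_(k2 < (size v).+1) FA k1 k2.+1 +
   \sum_(k1 < (size u).+1) \sum_(k2 < (size v).+1) FB k1.+1 k2.
  transitivity (\sum_(k1 < (size u).+1) (\sum_(k2 < (size v).+1) FA k1 k2.+1 +
      \sum_(k2 < (size v).+1) FB k1.+1 k2)); last by rewrite big_split.
  apply: eq_bigr => k1 _.
  transitivity (\sum_(k2 < (size v).+1) (FA k1 k2.+1 + FB k1.+1 k2)); last by rewrite big_split.
  by apply: eq_bigr => k2 _; rewrite /F /FA /FB /= SHcc big_cat !big_map.
rewrite E00 E0k Ek0 Ekk; ring.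
Qed.

Section VV.
Variables (R : numFieldType) (s : nat) (b c : 'I_s -> R).

Definition E (x : 'I_s) (u : seq nat) : R :=
  (\prod_(i <- u) (b x * c x ^+ i.-1)) / (size u)`!%:R.

Fixpoint V (xs : seq 'I_s) (w : seq nat) : R :=
  if xs is x :: xs' then \sum_(j < (size w).+1) E x (take j w) * V xs' (drop j w)
  else (w == [::])%:R.

Lemma E_SH x u v : E x u * E x v = \sum_(w <- SH u v) E x w.
Proof.
rewrite (eq_big_seq (fun _ => E x (u ++ v))); last first.
  by move=> w /SH_perm Hp; rewrite /E (perm_big _ Hp) (perm_size Hp).
rewrite big_const_seq count_predT size_SH iter_addr_0 /E big_cat size_cat /=.
have F : ((size u + size v)`!%:R : R) =
    ('C(size u + size v, size u))%:R * ((size u)`!)%:R * ((size v)`!)%:R.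
  by rewrite -!natrM -mulnA -(bin_fact (leq_addr (size v) (size u))) addKn.
rewrite F.
have h1 : ((size u)`!%:R : R) != 0 by rewrite pnatr_eq0 -lt0n fact_gt0.
have h2 : ((size v)`!%:R : R) != 0 by rewrite pnatr_eq0 -lt0n fact_gt0.
have h3 : (('C(size u + size v, size u))%:R : R) != 0.
  by rewrite pnatr_eq0 -lt0n bin_gt0 leq_addr.
move: h1 h2 h3.
set Fu := ((size u)`!%:R : R). set Fv := ((size v)`!%:R : R).
set C := (('C(size u + size v, size u))%:R : R).
rewrite -mulr_natr -/C => h1 h2 h3.
by field; rewrite h1 h2 h3.
Qed.

Lemma V_SH xs u v : V xs u * V xs v = \sum_(w <- SH u v) V xs w.
Proof.
elim: xs u v => [|x xs IH] u v.
  case: u => [|a u]; first by rewrite SH0l big_seq1 /= mul1r.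
  case: v => [|b' v]; first by rewrite SH0r big_seq1 /= mulr1.
  rewrite SHcc big_cat !big_map /= mul0r !big1 ?addr0 //.
rewrite /= big_distrl /=.
under eq_bigr do rewrite big_distrr /=.
transitivity (\sum_(j1 < (size u).+1) \sum_(j2 < (size v).+1)
    \sum_(w1 <- SH (take j1 u) (take j2 v)) \sum_(w2 <- SH (drop j1 u) (drop j2 v))
      E x w1 * V xs w2); last by rewrite -deconcat.
apply: eq_bigr => j1 _; apply: eq_bigr => j2 _.
rewrite mulrACA E_SH IH big_distrl /=; apply: eq_bigr => w1 _.
by rewrite big_distrr.
Qed.

End VV.

End Part2.

Section Part3.
Set Implicit Arguments. Unset Strict Implicit. Unset Printing Implicit Defensive.

Fixpoint ST (T : eqType) (xs : seq T) (k : nat) : seq (seq T) :=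
  if xs is x :: xs' then [seq nseq j x ++ t | j <- iota 0 k.+1, t <- ST xs' (k - j)]
  else (if k is 0 then [:: [::]] else [::]).

Definition ri (T : eqType) (xs : seq T) := fun a b : T => index a xs <= index b xs.

Lemma sorted_cons_min (T : eqType) (r : rel T) x s :
  (forall y, r x y) -> sorted r (x :: s) = sorted r s.
Proof. by move=> H; case: s => //= y s; rewrite H. Qed.

Lemma sorted_ri_cons (T : eqType) x (xs : seq T) t :
  x \notin xs -> all (mem xs) t -> sorted (ri (x :: xs)) t = sorted (ri xs) t.
Proof.
move=> nx Ht; apply: (eq_in_sorted (P := mem xs)) => // y z yin zin.
have nxy : x != y by apply: contraNneq nx => ->.
have nxz : x != z by apply: contraNneq nx => ->.
by rewrite /ri /= (negbTE nxy) (negbTE nxz) ltnS.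
Qed.

Lemma sorted_nseq_ri (T : eqType) x (xs : seq T) j t :
  sorted (ri (x :: xs)) (nseq j x ++ t) = sorted (ri (x :: xs)) t.
Proof.
elim: j => [//|j IH] /=; rewrite -IH.
by apply: (sorted_cons_min (r := ri (x :: xs))) => y; rewrite /ri /= eqxx.
Qed.

Lemma ri_trans (T : eqType) (xs : seq T) : transitive (ri xs).
Proof. by move=> y x z; rewrite /ri; apply: leq_trans. Qed.

Lemma sorted_split (T : eqType) x (xs : seq T) t :
  all (mem (x :: xs)) t -> sorted (ri (x :: xs)) t ->
  t = nseq (count_mem x t) x ++ filter (predC1 x) t.
Proof.
elim: t => [//|y t IH] /= /andP[yin Ht] Hs.
have Hs' : sorted (ri (x :: xs)) t by apply: (path_sorted Hs).
have [exy|nxy] := eqVneq y x.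
  by rewrite exy /= {1}(IH Ht Hs').
have xt : x \notin t.
  apply/negP => xt; have := order_path_min (@ri_trans _ _) Hs.
  move/allP/(_ x xt); rewrite /ri /= eqxx eq_sym (negbTE nxy).
  by [].
rewrite (count_memPn xt) /=; congr (_ :: _); symmetry.
apply/all_filterP/allP => z zt /=.
by apply: contraNneq xt => <-.
Qed.

Lemma mem_ST (T : eqType) (xs : seq T) k t : uniq xs ->
  (t \in ST xs k) = [&& size t == k, all (mem xs) t & sorted (ri xs) t].
Proof.
elim: xs k t => [|x xs IH] k t.
  move=> _; case: t => [|y t]; first by case: k.
  by case: k => //= k; rewrite andbF.
move=> /andP[nx Uxs].
change (t \in [seq nseq j x ++ t0 | j <- iota 0 k.+1, t0 <- ST xs (k - j)]) with
  (t \in ST (x :: xs) k).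
apply/allpairsPdep/and3P.
  case=> j [t' [jin t'in ->]].
  move: t'in; rewrite IH // => /and3P[/eqP st' Hat' so'].
  move: jin; rewrite mem_iota add0n ltnS => /= jk.
  split.
  - by rewrite size_cat size_nseq st' subnKC.
  - rewrite all_cat; apply/andP; split.
      by apply/allP => y /nseqP[-> _]; rewrite /= inE eqxx.
    by apply/allP => y /(allP Hat') /= yin; rewrite inE yin orbT.
  - by rewrite sorted_nseq_ri sorted_ri_cons.
case=> /eqP st Hat so.
have Et := sorted_split Hat so.
set j := count_mem x t; set t' := filter (predC1 x) t.
have Hat' : all (mem xs) t'.
  apply/allP => y; rewrite mem_filter => /andP[/= nyx yt].
  by have := allP Hat y yt; rewrite /= inE (negbTE nyx).
exists j, t'; split => //.
  by rewrite mem_iota add0n ltnS -st count_size.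
rewrite IH //; apply/and3P; split => //.
- rewrite size_filter -st; apply/eqP.
  by rewrite -(count_predC (pred1 x) t) addKn.
- rewrite -(sorted_ri_cons nx Hat'); apply: sorted_filter => //; exact: ri_trans.
Qed.

Lemma uniq_ST (T : eqType) (xs : seq T) k : uniq xs -> uniq (ST xs k).
Proof.
elim: xs k => [|x xs IH] k; first by case: k.
move=> /andP[nx Uxs].
change (uniq [seq nseq j x ++ t0 | j <- iota 0 k.+1, t0 <- ST xs (k - j)]).
apply: allpairs_uniq_dep => //.
- exact: iota_uniq.
- by move=> j _; apply: IH.
move=> [j1 t1] [j2 t2] /allpairsPdep[j1' [t1' [_ H1 [E1 E2]]]]
  /allpairsPdep[j2' [t2' [_ H2 [E3 E4]]]] /= E.
move: E1 E2 E3 E4 H1 H2 => /= <- <- <- <- H1 H2.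
have c1 : count_mem x t1 = 0%N.
  apply/count_memPn/negP => xt; move: H1; rewrite mem_ST // => /and3P[_ Ha _].
  by move/allP: Ha => /(_ x xt); rewrite /= (negbTE nx).
have c2 : count_mem x t2 = 0%N.
  apply/count_memPn/negP => xt; move: H2; rewrite mem_ST // => /and3P[_ Ha _].
  by move/allP: Ha => /(_ x xt); rewrite /= (negbTE nx).
have ej : j1 = j2.
  have := congr1 (count_mem x) E; rewrite !count_cat !count_nseq c1 c2 /= eqxx.
  by rewrite !mul1n !addn0.
subst j2; move/eqP: E; rewrite eqseq_cat ?size_nseq // eqxx /= => /eqP ->.
by [].
Qed.

Lemma ST_cons (T : eqType) x (xs : seq T) k :
  ST (x :: xs) k = [seq nseq j x ++ t | j <- iota 0 k.+1, t <- ST xs (k - j)].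
Proof. by []. Qed.

Local Open Scope ring_scope.

Section WW.
Variables (R : numFieldType) (s : nat) (b c : 'I_s -> R).

Definition Wt (xs : seq 'I_s) (t : seq 'I_s) (w : seq nat) : R :=
  (\prod_(p <- zip t w) (b p.1 * c p.1 ^+ p.2.-1)) /
  ((\prod_(y <- xs) (count_mem y t)`!)%N)%:R.

Lemma prod_zip_nseq (x : 'I_s) (u : seq nat) j : size u = j ->
  \prod_(p <- zip (nseq j x) u) (b p.1 * c p.1 ^+ p.2.-1) =
  \prod_(i <- u) (b x * c x ^+ i.-1).
Proof.
elim: u j => [|i u IH] [|j] //= H; first by rewrite !big_nil.
by rewrite !big_cons /= (IH j) //; case: H.
Qed.

Lemma Wt_cons x xs' j t' w : x \notin xs' -> all (mem xs') t' -> (j <= size w)%N ->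
  Wt (x :: xs') (nseq j x ++ t') w = E b c x (take j w) * Wt xs' t' (drop j w).
Proof.
move=> nx Ht jw.
have xt : x \notin t' by apply/negP => /(allP Ht); rewrite /= (negbTE nx).
rewrite /Wt /E -{1}(cat_take_drop j w) zip_cat ?size_nseq ?size_takel //.
rewrite big_cat /= prod_zip_nseq ?size_takel //.
rewrite big_cons count_cat count_nseq /= eqxx mul1n (count_memPn xt) addn0.
rewrite (eq_big_seq (fun y => (count_mem y t')`!)%N); last first.
  move=> y yin; rewrite count_cat count_nseq /=.
  have nxy : x != y by apply: contraNneq nx => ->.
  by rewrite (negbTE nxy) mul0n add0n.
by rewrite natrM invfM mulrACA.
Qed.

Lemma sum_ST_V xs w : uniq xs ->
  \sum_(t <- ST xs (size w)) Wt xs t w = V b c xs w.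
Proof.
elim: xs w => [|x xs IH] w.
  case: w => [|i w] _ /=; last by rewrite big_nil.
  by rewrite big_seq1 /Wt /= !big_nil divr1.
move=> /andP[nx Uxs]; rewrite ST_cons big_allpairs_dep.
have -> : iota 0 (size w).+1 = index_iota 0 (size w).+1 by rewrite /index_iota subn0.
rewrite big_mkord; apply: eq_bigr => j _.
rewrite (eq_big_seq (fun t' => E b c x (take j w) * Wt xs t' (drop j w))); last first.
  move=> t'; rewrite mem_ST // => /and3P[_ Ht _].
  by rewrite Wt_cons // -ltnS ltn_ord.
rewrite -big_distrr /= -/(V b c xs _) -IH // size_drop.
by [].
Qed.

End WW.

End Part3.

Section Part4.
Set Implicit Arguments. Unset Strict Implicit. Unset Printing Implicit Defensive.
Local Open Scope ring_scope.

Lemma sum_tuple_ST (R : zmodType) (T : finType) k (F : seq T -> R) :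
  \sum_(t : k.-tuple T | sorted (ri (enum T)) t) F t = \sum_(t <- ST (enum T) k) F t.
Proof.
rewrite -(big_map (@tval k T) (fun t => sorted (ri (enum T)) t) F) -big_filter.
apply: perm_big; apply: uniq_perm.
- by rewrite filter_uniq // map_inj_uniq ?index_enum_uniq //; exact: val_inj.
- by apply: uniq_ST; exact: enum_uniq.
move=> t; rewrite mem_filter mem_ST ?enum_uniq //.
have -> : all (mem (enum T)) t by apply/allP => y _; rewrite /= mem_enum.
rewrite andbC /=; congr (_ && _).
apply/mapP/eqP => [[t' _ ->]|st]; first by rewrite size_tuple.
by exists (Tuple (introT eqP st)) => //; exact: mem_index_enum.
Qed.

Lemma prod_tnth_zip (R : comRingType) (T : Type) (F : T -> nat -> R) k
  (t : k.-tuple T) (I : seq nat) : size I = k ->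
  \prod_(l < k) F (tnth t l) (nth 0%N I l) = \prod_(p <- zip t I) F p.1 p.2.
Proof.
elim: k t I => [|k IH] t I.
  by move=> _; case: t => [[|y tv] //] ?; rewrite big_ord0; case: I => [|? ?]; rewrite big_nil.
case/tupleP: t => y t; case: I => [//|i I] /= [HI].
rewrite big_ord_recl big_cons /= -(IH t I HI); congr (_ * _).
by apply: eq_bigr => l _; rewrite tnthS.
Qed.

Lemma sigw_enum s (t : seq 'I_s) :
  sigw t = (\prod_(y <- enum 'I_s) (count_mem y t)`!)%N.
Proof.
rewrite /sigw [in RHS](bigID (fun y => y \in t)) /= [X in (_ * X)%N]big1 ?muln1; last first.
  by move=> y /count_memPn ->.
rewrite -[RHS]big_filter; apply: perm_big; apply: uniq_perm.
- exact: undup_uniq.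
- by rewrite filter_uniq // enum_uniq.
by move=> y; rewrite mem_undup mem_filter mem_enum andbT.
Qed.

Lemma sorted_leq_ri s (t : seq 'I_s) :
  sorted (fun x y : 'I_s => (x <= y)%N) t = sorted (ri (enum 'I_s)) t.
Proof. by case: t => // y t; apply: eq_path => a a'; rewrite /ri !index_enum_ord. Qed.

Lemma vpoly_V (R : numFieldType) s (b c : 'I_s -> R) I :
  vpoly b c I = V b c (enum 'I_s) I.
Proof.
rewrite /vpoly -sum_ST_V ?enum_uniq // -sum_tuple_ST.
apply: eq_big => [t|t _]; first exact: sorted_leq_ri.
rewrite /Wt sigw_enum mulrAC -big_split /=.
by rewrite (prod_tnth_zip (fun y i => b y * c y ^+ i.-1) t (erefl _)).
Qed.

End Part4.

Unset Implicit Arguments.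
Local Open Scope ring_scope.

Theorem mainTheorem5 (R : realFieldType) (s : nat) (b c : 'I_s -> R) (I J : seq nat) :
  all (fun i => (0 < i)%N) I -> all (fun i => (0 < i)%N) J ->
  vpoly b c I * vpoly b c J
    = \sum_(p : {perm 'I_(size I + size J)} | shuffleb p) vpoly b c (shuffle_word p)
  /\
  wcoef R I * wcoef R J
    = \sum_(p : {perm 'I_(size I + size J)} | shuffleb p) wcoef R (shuffle_word p).
Proof.
move=> HI HJ; split.
  rewrite sum_shuffle !vpoly_V V_SH.
  by apply: eq_bigr => w _; rewrite vpoly_V.
rewrite sum_shuffle sum_SH_rev -{1}(revK I) -{1}(revK J) !wcoef_rev Z_SH ?all_rev //.
by apply: eq_bigr => w _; rewrite wcoef_rev.
Qed.
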